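(* Let $r\ge 3$ and $k\ge 2$ be integers. There exist $r$-sets $(e_i)_{i=0}^{T_1}$, all containing $v_1^r$, and an $r$-graph $H_1$ with vertex set $A_{r-1}^*\cup\{v_1^r\}$ that is $(e_i)_{i=0}^{T_1}$-sequential, where $T_1=(2k-1)^{r-3}(8k^2-12k+6)-2$.
   Context: Fix a positive integer $k$. For every integer $i\ge1$ let $A_i=\{v_1^i,v_2^i,\dots,v_{4k-3}^i\}$ (pairwise disjoint sets) and $A_i^*=\bigcup_{j=1}^iA_j$. An $r$-graph is an $r$-uniform hypergraph identified with its edge set; $F_r=K^r_{r+1}$. For an $r$-graph $G_0$ on vertex set $V$, the $F_r$-bootstrap process in the complete $r$-graph on $V$ is: $G_i=G_{i-1}\cup\{e : e\notin G_{i-1} \text{ an } r\text{-subset of } V,\ \exists\, w\in V\setminus e \text{ with every other } r\text{-subset of } e\cup\{w\} \text{ in } G_{i-1}\}$; the $r$-sets in $G_i\setminus G_{i-1}$ are infected at step $i$; $G_0$ is stationary if $G_1=G_0$. Definition (sequential): Let $r\ge3$, $H$ an $r$-graph with vertex set $V(H)\subseteq A_r^*$, and $(e_i)_{i=0}^T$ a sequence of $r$-subsets of $V(H)$ with $e_0\in H$. Then $H$ is $(e_i)_{i=0}^T$-sequential if, for the $F_r$-bootstrap process in the complete $r$-graph on $V(H)$: (i) starting from $H$, the process runs for $T$ steps (becomes stationary after step $T$), infecting only $e_i$ at step $i$ for each $i\in[1,T]$; (ii) $H\setminus\{e_0\}$ is stationary; (iii) starting from $(H\cup\{e_T\})\setminus\{e_0\}$,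 the process infects only $e_{T-i}$ at step $i$ for each $i\in[1,T]$. *)

(* Defs.v *)
From mathcomp Require Import all_boot.
Set Implicit Arguments. Unset Strict Implicit. Unset Printing Implicit Defensive.

(* Ambient vertex type: the pair (i, j) stands for v_j^i, for 1 <= i <= r and
   1 <= j <= 4k-3 (coordinate 0 is unused). *)
Definition vtx (r k : nat) : finType := ('I_r.+1 * 'I_(4 * k - 3).+1)%type.

Definition vv (r k i j : nat) : vtx r k := (inord i, inord j).

Definition Astar (r k i : nat) : {set vtx r k} :=
  [set x : vtx r k | (1 <= nat_of_ord x.1 <= i) && (1 <= nat_of_ord x.2 <= 4 * k - 3)].

Section Bootstrap.
Variable T : finType.

Definition rsubset (r : nat) (W e : {set T}) : bool := (e \subset W) && (#|e| == r).

Definition bstep (r : nat) (W : {set T}) (G : {set {set T}}) : {set {set T}} :=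
  G :|: [set e | [&& rsubset r W e, e \notin G &
     [exists w in W :\: e,
        [forall f : {set T},
           [&& f \subset e :|: [set w], #|f| == r & f != e] ==> (f \in G)]]]].

Definition bproc (r : nat) (W : {set T}) (G0 : {set {set T}}) (n : nat) :=
  iter n (bstep r W) G0.

Definition stationary (r : nat) (W : {set T}) (G : {set {set T}}) : Prop :=
  bstep r W G = G.

Definition sequential (r : nat) (W : {set T}) (H : {set {set T}})
    (e : nat -> {set T}) (Tn : nat) : Prop :=
  [/\ (forall i, i <= Tn -> rsubset r W (e i)),
      e 0 \in H,
      (forall i, 1 <= i <= Tn ->
         bproc r W H i :\: bproc r W H i.-1 = [set e i])
      /\ stationary r W (bproc r W H Tn),
      stationary r W (H :\ e 0) &
      (forall i, 1 <= i <= Tn ->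
         bproc r W ((H :|: [set e Tn]) :\ e 0) i
           :\: bproc r W ((H :|: [set e Tn]) :\ e 0) i.-1 = [set e (Tn - i)])].

End Bootstrap.

(* Main.v *)
From mathcomp Require Import zify.
Require Import Defs.
From mathcomp Require Import all_boot.
Set Implicit Arguments. Unset Strict Implicit. Unset Printing Implicit Defensive.

Section Path.
Variable K : nat.
Hypothesis K_gt0 : 0 < K.

Definition LL (n : nat) := (K ^ n).*2.

Lemma LL_ge2 n : 2 <= LL n.
Proof. rewrite /LL; have := expn_gt0 K n; rewrite K_gt0 /=; lia. Qed.

Definition jf (B t o : nat) :=
  if o == B.-1 then (if odd t then 0 else B.-2)
  else (if odd t then B.-2 - o else o).

Definition topv (B t o : nat) := if o == B.-1 then t.*2.+2 else t.*2.+1.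

Fixpoint pt (n i : nat) {struct n} : nat -> nat :=
  match n with
  | 0 => fun _ => 0
  | n'.+1 => fun d =>
      if d == n'.+1 then topv (LL n') (i %/ LL n') (i %% LL n')
      else pt n' (jf (LL n') (i %/ LL n') (i %% LL n')) d
  end.

Lemma ptS n i d : pt n.+1 i d =
  if d == n.+1 then topv (LL n) (i %/ LL n) (i %% LL n)
  else pt n (jf (LL n) (i %/ LL n) (i %% LL n)) d.
Proof. by []. Qed.

Lemma divmod_tB B t o : 0 < B -> o < B -> (t * B + o) %/ B = t /\ (t * B + o) %% B = o.
Proof.
move=> hB ho; split.
  by rewrite divnMDl // divn_small // addn0.
by rewrite modnMDl modn_small.
Qed.

Lemma ptS' n t o d : o < LL n -> pt n.+1 (t * LL n + o) d =
  if d == n.+1 then topv (LL n) t o else pt n (jf (LL n) t o) d.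
Proof.
move=> ho; have hB : 0 < LL n by have := LL_ge2 n; lia.
by rewrite ptS; have [-> ->] := divmod_tB t hB ho.
Qed.

Lemma decomp n i : i = (i %/ LL n) * LL n + i %% LL n /\ i %% LL n < LL n.
Proof.
split; first exact: divn_eq.
by rewrite ltn_mod; have := LL_ge2 n; lia.
Qed.

Lemma jf_lt B t o : 2 <= B -> o < B -> (jf B t o).+1 < B.
Proof. rewrite /jf => hB ho; case: eqP => h; case: (odd t); lia. Qed.

Lemma decomp' n i : exists t o, i = t * LL n + o /\ o < LL n.
Proof. have [E h] := decomp n i; by exists (i %/ LL n), (i %% LL n). Qed.

Lemma LLS n : LL n.+1 = K * LL n.
Proof. rewrite /LL expnS; lia. Qed.

Lemma pt_out n i d : (d == 0) || (n < d) -> pt n i d = 0.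
Proof.
elim: n i => [//|n IH] i h; rewrite ptS.
case: eqP => [E|_]; first by lia.
apply: IH; lia.
Qed.

Lemma pt_range n i d : i.+1 < LL n -> 1 <= d <= n -> 1 <= pt n i d <= K.*2.-1.
Proof.
elim: n i d => [|n IH] i d hi hd; first by lia.
have [Ei ho] := decomp n i.
move: hi; rewrite Ei ptS' // LLS => hi.
set t := i %/ LL n in Ei hi *; set o := i %% LL n in Ei ho hi *.
have h2 := LL_ge2 n.
case: eqP => hdn.
  rewrite /topv; case: eqP => ho1.
    have : t.+1 * LL n < K * LL n by lia.
    rewrite ltn_mul2r; lia.
  have : t * LL n < K * LL n by nia.
  rewrite ltn_mul2r; lia.
apply: IH; [exact: jf_lt | lia].
Qed.


Lemma topv_eq B t o t' o' : 2 <= B -> topv B t o = topv B t' o' -> t = t' /\ (o == B.-1) = (o' == B.-1).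
Proof. rewrite /topv => hB; case: eqP; case: eqP => h1 h2 /=; lia. Qed.

Lemma pt_inj n i j : i.+1 < LL n -> j.+1 < LL n ->
  (forall d, 1 <= d <= n -> pt n i d = pt n j d) -> i = j.
Proof.
elim: n i j => [|n IH] i j hi hj h; first by move: hi hj; rewrite /LL expn0; lia.
have h2 := LL_ge2 n.
move: hi hj h; have [t [o [-> hoi]]] := decomp' n i; have [t' [o' [-> hoj]]] := decomp' n j.
move=> hi hj h.
have htop : pt n.+1 (t * LL n + o) n.+1 = pt n.+1 (t' * LL n + o') n.+1 by apply: h; lia.
move: htop; rewrite !ptS' // eqxx => /topv_eq [] // Et Eo.
have hl : jf (LL n) t o = jf (LL n) t' o'.
  apply: IH; try exact: jf_lt.
  move=> d hd; have := h d; rewrite !ptS' //.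
  have -> : (d == n.+1) = false by apply/eqP; lia.
  by apply; lia.
move: hl Eo; rewrite -Et /jf; case: eqP => h3; case: eqP => h4; case: (odd t) => /= h5 h6; lia.
Qed.

Lemma step_dec n i : i.+2 < LL n.+1 ->
  let B := LL n in let t := i %/ B in
  ( (forall x, x != n.+1 -> pt n.+1 i x = pt n (if odd t then 0 else B.-2) x /\
                            pt n.+1 i.+1 x = pt n (if odd t then 0 else B.-2) x)
    /\ ((pt n.+1 i n.+1 = t.*2.+1 /\ pt n.+1 i.+1 n.+1 = t.*2.+2) \/
        (pt n.+1 i n.+1 = t.*2.+2 /\ pt n.+1 i.+1 n.+1 = t.*2.+3)) )
  \/ ( pt n.+1 i n.+1 = t.*2.+1 /\ pt n.+1 i.+1 n.+1 = t.*2.+1 /\ exists j, j.+2 < B /\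
      ((forall x, x != n.+1 -> pt n.+1 i x = pt n j x /\ pt n.+1 i.+1 x = pt n j.+1 x) \/
       (forall x, x != n.+1 -> pt n.+1 i x = pt n j.+1 x /\ pt n.+1 i.+1 x = pt n j x))).
Proof.
move=> hi; cbv zeta.
have h2 : 2 <= LL n := LL_ge2 n.
have [t [o [Ei ho]]] := decomp' n i.
have Et : i %/ LL n = t by rewrite Ei; have [-> _] := divmod_tB t (ltnW h2) ho.
rewrite Et; subst i.
move: hi; rewrite LLS => hi.
have [ho'|[ho'|ho']] : o < (LL n).-2 \/ o = (LL n).-2 \/ o = (LL n).-1 by lia.
- right.
  have hjf : forall x, x != n.+1 -> pt n.+1 (t * LL n + o) x = pt n (jf (LL n) t o) x /\
             pt n.+1 (t * LL n + o.+1) x = pt n (jf (LL n) t o.+1) x.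
    by move=> x /negPf xn; rewrite !ptS' ?xn //; lia.
  rewrite -addnS !ptS' // ?eqxx; last by lia.
  rewrite /topv.
  have -> : (o == (LL n).-1) = false by apply/eqP; lia.
  have -> : (o.+1 == (LL n).-1) = false by apply/eqP; lia.
  split => //; split => //.
  move: hjf; rewrite /jf.
  have -> : (o == (LL n).-1) = false by apply/eqP; lia.
  have -> : (o.+1 == (LL n).-1) = false by apply/eqP; lia.
  case: (odd t) => hjf.
    exists ((LL n).-2 - o.+1); split; first by lia.
    right => x xn; have [-> ->] := hjf x xn; split => //; congr pt; lia.
  exists o; split; first by lia.
  by left => x xn; have [-> ->] := hjf x xn.
- left.
  have Ei1 : (t * LL n + o).+1 = t * LL n + (LL n).-1 by lia.
  rewrite Ei1.
  have hjf : forall x, x != n.+1 -> pt n.+1 (t * LL n + o) x = pt n (jf (LL n) t o) x /\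
             pt n.+1 (t * LL n + (LL n).-1) x = pt n (jf (LL n) t (LL n).-1) x.
    by move=> x /negPf xn; rewrite !ptS' ?xn //; lia.
  rewrite !ptS' // ?eqxx; try lia.
  rewrite /topv.
  have -> : (o == (LL n).-1) = false by apply/eqP; lia.
  rewrite eqxx; split; last by left.
  move=> x xn; have [-> ->] := hjf x xn; rewrite /jf eqxx.
  have -> : (o == (LL n).-1) = false by apply/eqP; lia.
  split => //; case: (odd t) => //; congr pt; lia.
- left.
  have Ei1 : (t * LL n + o).+1 = t.+1 * LL n + 0 by rewrite mulSn; lia.
  rewrite Ei1.
  have hjf : forall x, x != n.+1 -> pt n.+1 (t * LL n + o) x = pt n (jf (LL n) t o) x /\
             pt n.+1 (t.+1 * LL n + 0) x = pt n (jf (LL n) t.+1 0) x.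
    by move=> x /negPf xn; rewrite !ptS' ?xn //; lia.
  rewrite !ptS' // ?eqxx; try lia.
  rewrite /topv.
  have -> : (0 == (LL n).-1) = false by apply/eqP; lia.
  rewrite ho' eqxx; split; last by right.
  move=> x xn; rewrite -ho'; have [-> ->] := hjf x xn; rewrite /jf ho' eqxx.
  have -> : (0 == (LL n).-1) = false by apply/eqP; lia.
  split => //=; case: (odd t) => //=; congr pt; lia.
Qed.

Lemma pt_step n i : i.+2 < LL n -> exists d, 1 <= d <= n /\
  (pt n i d = (pt n i.+1 d).+1 \/ pt n i.+1 d = (pt n i d).+1) /\
  forall x, x != d -> pt n i x = pt n i.+1 x.
Proof.
elim: n i => [|n IH] i hi; first by move: hi; rewrite /LL expn0.
have [[hx htop]|[h1 [h2 [j [hj hf]]]]] := step_dec hi.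
- exists n.+1; split; first by lia.
  split; first by case: htop; lia.
  by move=> x /hx [-> ->].
- have [d [hd [hc he]]] := IH j hj.
  exists d; split; first by lia.
  have dn : d != n.+1 by apply/eqP; lia.
  case: hf => hf.
    split; first by have [-> ->] := hf d dn.
    move=> x xd; case: (eqVneq x n.+1) => [->|xn]; first by rewrite h1 h2.
    by have [-> ->] := hf x xn; apply: he.
  split; first by have [-> ->] := hf d dn; lia.
  move=> x xd; case: (eqVneq x n.+1) => [->|xn]; first by rewrite h1 h2.
  by have [-> ->] := hf x xn; rewrite (he x xd).
Qed.

Lemma pt_diff n i d : i.+2 < LL n -> pt n i d != pt n i.+1 d ->
  [/\ 1 <= d <= n, (pt n i d = (pt n i.+1 d).+1 \/ pt n i.+1 d = (pt n i d).+1) &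
  forall x, x != d -> pt n i x = pt n i.+1 x].
Proof.
move=> hi hd; have [d0 [hd0 [hc he]]] := pt_step hi.
case: (eqVneq d d0) => [->|dd0]; first by split.
by move: hd; rewrite he // eqxx.
Qed.

Lemma pt_odd n i d x : i.+2 < LL n -> pt n i d != pt n i.+1 d -> d < x -> x <= n ->
  odd (pt n i x).
Proof.
elim: n i d x => [|n IH] i d x hi hd hx hxn; first by lia.
have [dr _ _] := pt_diff hi hd.
have [[hf htop]|[h1 [h2 [j [hj hf]]]]] := step_dec hi.
- case: (eqVneq d n.+1) => [E|dn]; first by lia.
  by have [E1 E2] := hf d dn; rewrite E1 E2 eqxx in hd.
- case: (eqVneq d n.+1) => [E|dn]; first by rewrite E h1 h2 eqxx in hd.
  case: (eqVneq x n.+1) => [->|xn]; first by rewrite h1 /=; lia.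
  case: hf => hf; have [E1 E2] := hf d dn; have [E3 E4] := hf x xn;
    rewrite E1 E2 in hd; rewrite E3.
    by apply: (IH j d) => //; lia.
  have hd' : pt n j d != pt n j.+1 d by rewrite eq_sym.
  have [_ _ he] := pt_diff hj hd'.
  rewrite -he; last by apply/eqP; lia.
  apply: (IH j d) => //; lia.
Qed.


Lemma lower_info n i d : i.+2 < LL n.+1 -> d != n.+1 -> pt n.+1 i d != pt n.+1 i.+1 d ->
  pt n.+1 i n.+1 = pt n.+1 i.+1 n.+1 /\
  exists j, [/\ j.+2 < LL n, pt n j d != pt n j.+1 d,
    minn (pt n j d) (pt n j.+1 d) = minn (pt n.+1 i d) (pt n.+1 i.+1 d) &
    forall y, y != n.+1 -> y != d -> pt n.+1 i y = pt n j y].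
Proof.
move=> hi dn hd.
have [[hf htop]|[h1 [h2 [j [hj hf]]]]] := step_dec hi.
  by have [E1 E2] := hf d dn; rewrite E1 E2 eqxx in hd.
split; first by rewrite h1 h2.
exists j; case: hf => hf; have [E1 E2] := hf d dn; rewrite E1 E2 in hd *.
  split => // y yn yd; by have [-> _] := hf y yn.
have hd' : pt n j d != pt n j.+1 d by rewrite eq_sym.
have [_ _ he] := pt_diff hj hd'.
split => //; first by rewrite minnC.
move=> y yn yd; have [-> _] := hf y yn; by rewrite he.
Qed.

Lemma pt_low n i j d x : i.+2 < LL n -> j.+2 < LL n ->
  pt n i d != pt n i.+1 d -> pt n j d != pt n j.+1 d ->
  minn (pt n i d) (pt n i.+1 d) = minn (pt n j d) (pt n j.+1 d) -> x < d ->
  pt n i x = pt n j x.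
Proof.
elim: n i j d x => [|n IH] i j d x hi hj hdi hdj hm hx; first by move: hi; rewrite /LL expn0.
have [dri _ _] := pt_diff hi hdi.
case: (eqVneq d n.+1) => [Ed|dn].
- subst d.
  have [[hfi htopi]|[h1 [h2 _]]] := step_dec hi; last by rewrite h1 h2 eqxx in hdi.
  have [[hfj htopj]|[h1 [h2 _]]] := step_dec hj; last by rewrite h1 h2 eqxx in hdj.
  have xn : x != n.+1 by apply/eqP; lia.
  have [-> _] := hfi x xn; have [-> _] := hfj x xn.
  have -> : i %/ LL n = j %/ LL n.
    by move: hm; case: htopi => [[-> ->]|[-> ->]]; case: htopj => [[-> ->]|[-> ->]]; lia.
  by [].
- have [_ [ji [hji hdji hmi hfi]]] := lower_info hi dn hdi.
  have [_ [jj [hjj hdjj hmj hfj]]] := lower_info hj dn hdj.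
  have xn : x != n.+1 by apply/eqP; lia.
  have xd : x != d by apply/eqP; lia.
  rewrite (hfi x xn xd) (hfj x xn xd).
  apply: (IH ji jj d x) => //; by rewrite hmi hmj.
Qed.

Lemma pt_adj n i j d : i.+1 < LL n -> j.+1 < LL n -> 1 <= d <= n ->
  (forall x, 1 <= x <= n -> x != d -> pt n i x = pt n j x) ->
  (pt n i d = (pt n j d).+1 \/ pt n j d = (pt n i d).+1) -> i = j.+1 \/ j = i.+1.
Proof.
elim: n i j d => [|n IH] i j d hi hj hd hag hc; first by lia.
have h2 := LL_ge2 n.
move: hi hj hag hc; have [t [o [-> hoi]]] := decomp' n i; have [t' [o' [-> hoj]]] := decomp' n j.
rewrite LLS => hi hj hag hc.
have hlow : forall x, x != n.+1 -> pt n.+1 (t * LL n + o) x = pt n (jf (LL n) t o) x /\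
                                   pt n.+1 (t' * LL n + o') x = pt n (jf (LL n) t' o') x.
  by move=> x /negPf xn; rewrite !ptS' ?xn.
have htop : pt n.+1 (t * LL n + o) n.+1 = topv (LL n) t o /\
            pt n.+1 (t' * LL n + o') n.+1 = topv (LL n) t' o'.
  by rewrite !ptS' ?eqxx.
case: (eqVneq d n.+1) => [Ed|dn].
- subst d.
  have hj' : jf (LL n) t o = jf (LL n) t' o'.
    apply: pt_inj; try exact: jf_lt.
    move=> x hx; have xn : x != n.+1 by apply/eqP; lia.
    have [<- <-] := hlow x xn; apply: hag => //; lia.
  move: hc hj'; case: htop => -> ->.
  rewrite /topv /jf; case: eqP => e1; case: eqP => e2;
   case: (boolP (odd t)) => ot; case: (boolP (odd t')) => ot' /= hc hj'; try lia.
- have htt : topv (LL n) t o = topv (LL n) t' o'.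
    case: htop => <- <-; apply: hag => //; lia.
  have [Et Eo] := topv_eq h2 htt; subst t'.
  have hj' : jf (LL n) t o = (jf (LL n) t o').+1 \/ jf (LL n) t o' = (jf (LL n) t o).+1.
    apply: (IH _ _ d); try exact: jf_lt.
    + lia.
    + move=> x hx xd; have xn : x != n.+1 by apply/eqP; lia.
      have [<- <-] := hlow x xn; apply: hag => //; lia.
    + by have [<- <-] := hlow d dn.
  move: hj' Eo; rewrite /jf; case: eqP => e1; case: eqP => e2;
   case: (boolP (odd t)) => ot /= hc' Eo; lia.
Qed.

End Path.

Section Sets.
Variables (r k : nat).
Hypotheses (hr : 3 <= r) (hk : 2 <= k).
Local Notation V := (vtx r k).
Variable p : nat -> nat -> nat.
Variable T : nat.
Hypothesis hT : 0 < T.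
Hypothesis hrange : forall i d, i <= T -> 0 < d <= r.-1 -> 0 < p i d <= 4 * k - 3.
Hypothesis hinj : forall i j, i <= T -> j <= T ->
  (forall d, 0 < d <= r.-1 -> p i d = p j d) -> i = j.
Hypothesis hex : forall s, s < T -> exists2 d, 0 < d <= r.-1 & p s d != p s.+1 d.
Hypothesis huq : forall s d (x : nat), s < T -> p s d != p s.+1 d -> x != d -> p s x = p s.+1 x.
Hypothesis hcons : forall s d, s < T -> p s d != p s.+1 d ->
  p s d = (p s.+1 d).+1 \/ p s.+1 d = (p s d).+1.
Hypothesis hodd : forall s d x, s < T -> p s d != p s.+1 d -> d < x -> x <= r.-1 ->
  odd (p s x).
Hypothesis hlow : forall s s' d x, s < T -> s' < T -> p s d != p s.+1 d ->
  p s' d != p s'.+1 d -> minn (p s d) (p s.+1 d) = minn (p s' d) (p s'.+1 d) ->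
  x < d -> p s x = p s' x.
Hypothesis hadj : forall i j d, i <= T -> j <= T -> 0 < d <= r.-1 ->
  (forall x, 0 < x <= r.-1 -> x != d -> p i x = p j x) ->
  (p i d = (p j d).+1 \/ p j d = (p i d).+1) -> i = j.+1 \/ j = i.+1.

Definition vx : V := vv r k r 1.
Definition fset (q : nat -> nat) : {set V} :=
  [set u : V | (0 < u.1 <= r.-1) && (u.2 == q u.1 :> nat)].
Definition ee i := vx |: fset (p i).
Definition SSs s := ee s :|: ee s.+1.
Definition DD s := fset (p s) :|: fset (p s.+1).
Definition WW : {set V} := Astar r k (r - 1) :|: [set vx].
Definition mkv (d a : nat) : V := (inord d, inord a).

Lemma le_r z : 0 < z <= r.-1 -> z <= r.
Proof. lia. Qed.

Lemma r_pred : r <= r.-1 -> False.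
Proof. lia. Qed.

Lemma vx1 : (vx.1 : nat) = r.
Proof. by rewrite /vx /vv /= inordK. Qed.
Lemma vx2 : (vx.2 : nat) = 1.
Proof. rewrite /vx /vv /= inordK //; lia. Qed.
Lemma mkv1 d a : d <= r -> ((mkv d a).1 : nat) = d.
Proof. by move=> h; rewrite /mkv /= inordK. Qed.
Lemma mkv2 d a : a <= 4 * k - 3 -> ((mkv d a).2 : nat) = a.
Proof. by move=> h; rewrite /mkv /= inordK. Qed.

Lemma vtx_eq (u w : V) : (u.1 : nat) = w.1 -> (u.2 : nat) = w.2 -> u = w.
Proof. by case: u w => [a b] [c d] /= /val_inj -> /val_inj ->. Qed.

Lemma vtx_neq (u w : V) : u != w -> (u.1 : nat) <> w.1 \/ (u.2 : nat) <> w.2.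
Proof.
move=> h; case: (eqVneq (u.1 : nat) w.1) => h1; last by left; apply/eqP.
right => h2; by rewrite (vtx_eq h1 h2) eqxx in h.
Qed.

Lemma in_fset u q : (u \in fset q) = (0 < u.1 <= r.-1) && (u.2 == q u.1 :> nat).
Proof. by rewrite inE. Qed.

Lemma fset_mkv q d : 0 < d <= r.-1 -> q d <= 4 * k - 3 -> mkv d (q d) \in fset q.
Proof. move=> h1 h2; rewrite in_fset mkv1 ?mkv2 ?eqxx ?h1 //; lia. Qed.

Lemma fset_nvx q u : u \in fset q -> u != vx.
Proof. rewrite in_fset => /andP [h _]; apply/eqP => E; move: h; rewrite E vx1; lia. Qed.

Lemma in_W u : u \in WW -> u = vx \/ (0 < u.1 <= r.-1 /\ 0 < u.2 <= 4 * k - 3).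
Proof.
rewrite /WW /Astar !inE => /orP [/andP [h1 h2]|/eqP ->]; last by left.
right; split; lia.
Qed.

Lemma in_ee u i : (u \in ee i) = (u == vx) || (u \in fset (p i)).
Proof. by rewrite /ee in_setU1. Qed.

Lemma in_SSs u s : u \in SSs s -> u = vx \/
  (0 < u.1 <= r.-1 /\ ((u.2 : nat) = p s u.1 \/ (u.2 : nat) = p s.+1 u.1)).
Proof.
rewrite /SSs in_setU !in_ee !in_fset.
case: eqP => [->|_] /=; first by left.
move=> /orP [/andP [h /eqP e]|/andP [h /eqP e]]; right; split => //; tauto.
Qed.

Lemma card_fset q : (forall d, 0 < d <= r.-1 -> q d <= 4 * k - 3) -> #|fset q| = r.-1.
Proof.
move=> hq.
pose D := [set d : 'I_r.+1 | 0 < d <= r.-1].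
have -> : #|fset q| = #|D|.
  rewrite -(@card_in_imset _ _ (fun u : V => u.1) (fset q)).
    apply: eq_card => d; rewrite /D [in RHS]inE; apply/imsetP/idP.
      by case=> u; rewrite in_fset => /andP [h _] ->.
    move=> hd; exists (mkv d (q d)); first by apply: fset_mkv => //; apply: hq.
    by apply: val_inj; rewrite /= inordK.
  move=> u w; rewrite !in_fset => /andP [_ /eqP e1] /andP [_ /eqP e2] E.
  apply: vtx_eq; first by rewrite E.
  by rewrite e1 e2 E.
have -> : D = [set: 'I_r.+1] :\ ord0 :\ ord_max.
  apply/setP => d; rewrite !inE -!val_eqE /=.
  have := ltn_ord d; lia.
have := cardsD1 ord_max ([set: 'I_r.+1] :\ ord0).
have := cardsD1 (@ord0 r) [set: 'I_r.+1].
rewrite !inE cardsT card_ord -val_eqE /=.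
have -> : (r == 0) = false by apply/eqP; lia.
move=> h1; rewrite /= add1n => h2; move: h1; rewrite h2 => h1; set X := #|_ :\ ord0 :\ ord_max| in h1 *; lia.
Qed.


Lemma ss_two s y z : s < T -> y \in SSs s -> z \in SSs s -> y != vx -> z != vx ->
  (y.1 : nat) = z.1 -> (y.2 : nat) <> z.2 ->
  [/\ p s y.1 != p s.+1 y.1, minn y.2 z.2 = minn (p s y.1) (p s.+1 y.1) &
      ((y.2 : nat) = (z.2).+1 \/ (z.2 : nat) = (y.2).+1)].
Proof.
move=> hs hy hz yv zv e12 ne.
have [/eqP|[hy1 hy2]] := in_SSs hy; first by rewrite (negPf yv).
have [/eqP|[hz1 hz2]] := in_SSs hz; first by rewrite (negPf zv).
rewrite -e12 in hz2.
have hd : p s y.1 != p s.+1 y.1 by apply/eqP => E; rewrite E in hy2; lia.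
have := hcons hs hd.
split => //; lia.
Qed.

Lemma ss_pos s u d : s < T -> u \in SSs s -> u != vx -> p s d != p s.+1 d ->
  (u.1 : nat) != d -> (u.2 : nat) = p s u.1.
Proof.
move=> hs hu uv hd ud.
have [/eqP|[hu1 hu2]] := in_SSs hu; first by rewrite (negPf uv).
by have := huq hs hd ud; lia.
Qed.

Lemma ss_three s y z u : s < T -> y \in SSs s -> z \in SSs s -> u \in SSs s ->
  y != vx -> z != vx -> u != vx -> (y.1 : nat) = z.1 -> (y.1 : nat) = u.1 ->
  (y.2 : nat) <> z.2 -> (y.2 : nat) <> u.2 -> (z.2 : nat) <> u.2 -> False.
Proof.
move=> hs hy hz hu yv zv uv e1 e2 n1 n2 n3.
have [/eqP|[_ hy2]] := in_SSs hy; first by rewrite (negPf yv).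
have [/eqP|[_ hz2]] := in_SSs hz; first by rewrite (negPf zv).
have [/eqP|[_ hu2]] := in_SSs hu; first by rewrite (negPf uv).
rewrite -e1 in hz2; rewrite -e2 in hu2; lia.
Qed.

Lemma pt_in q s : s < T -> (forall d, 0 < d <= r.-1 -> q d <= 4 * k - 3) ->
  fset q \subset SSs s ->
  exists j, (j = s \/ j = s.+1) /\ forall d, 0 < d <= r.-1 -> q d = p j d.
Proof.
move=> hs hq /subsetP hsub.
have [d hd hdd] := hex hs.
have hv : forall x, 0 < x <= r.-1 -> q x = p s x \/ q x = p s.+1 x.
  move=> x hx; have hm := fset_mkv hx (hq x hx).
  have [E|[_ h2]] := in_SSs (hsub _ hm).
    by move: (fset_nvx hm); rewrite E eqxx.
  by move: h2; rewrite mkv1 ?mkv2; try lia; apply: hq.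
have [E|E] := hv d hd.
  exists s; split; first by left.
  move=> x hx; case: (eqVneq x d) => [->//|xd].
  by have := huq hs hdd xd; have := hv x hx; lia.
exists s.+1; split; first by right.
move=> x hx; case: (eqVneq x d) => [->//|xd].
by have := huq hs hdd xd; have := hv x hx; lia.
Qed.

Lemma prange i d : i <= T -> 0 < d <= r.-1 -> p i d <= 4 * k - 3.
Proof. by move=> hi hd; have := hrange hi hd; lia. Qed.

Lemma ee_sub l s : l <= T -> s < T -> ee l \subset SSs s -> l = s \/ l = s.+1.
Proof.
move=> hl hs hsub.
have hq : forall d, 0 < d <= r.-1 -> p l d <= 4 * k - 3 by move=> d; apply: prange.
have hs2 : fset (p l) \subset SSs s.
  by apply: subset_trans hsub; apply/subsetP => u hu; rewrite in_ee hu orbT.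
have [j [hj he]] := pt_in hs hq hs2.
have hjT : j <= T by lia.
have := hinj hl hjT he; lia.
Qed.

Lemma ee_card i : i <= T -> #|ee i| = r.
Proof.
move=> hi; rewrite /ee cardsU1.
have -> : (vx \in fset (p i)) = false by apply/negP => /fset_nvx; rewrite eqxx.
rewrite card_fset /=; first by lia.
by move=> d; apply: prange.
Qed.

Lemma fset_W q : (forall d, 0 < d <= r.-1 -> 0 < q d <= 4 * k - 3) -> fset q \subset WW.
Proof.
move=> hq; apply/subsetP => u; rewrite in_fset => /andP [h1 /eqP h2].
rewrite /WW /Astar !inE; apply/orP; left.
have := hq _ h1; rewrite -h2; lia.
Qed.

Lemma vx_W : vx \in WW.
Proof. by rewrite /WW in_setU set11 orbT. Qed.

Lemma ee_W i : i <= T -> ee i \subset WW.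
Proof.
move=> hi; rewrite /ee subUset sub1set vx_W /=.
by apply: fset_W => d hd; apply: hrange.
Qed.

Lemma vx_SS s : vx \in SSs s.
Proof. by rewrite /SSs in_setU in_ee eqxx. Qed.

Lemma SS_W s : s < T -> SSs s \subset WW.
Proof. move=> hs; rewrite /SSs subUset !ee_W //; lia. Qed.

Lemma SS_DD s u : u \in SSs s -> u != vx -> u \in DD s.
Proof. by rewrite /SSs in_setU !in_ee /DD in_setU => + /negPf uv; rewrite uv. Qed.

Lemma DD_SS s u : u \in DD s -> u \in SSs s.
Proof. by rewrite /SSs in_setU !in_ee /DD in_setU => /orP [->|->]; rewrite !orbT. Qed.

Lemma DD_nvx s u : u \in DD s -> u != vx.
Proof. by rewrite /DD in_setU => /orP [] /fset_nvx. Qed.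

Lemma in_DD s u : u \in DD s = (0 < u.1 <= r.-1) && ((u.2 == p s u.1 :> nat) || (u.2 == p s.+1 u.1 :> nat)).
Proof. by rewrite /DD in_setU !in_fset; case: (0 < u.1 <= r.-1). Qed.

Lemma DD_card s : s < T -> #|DD s| = r.
Proof.
move=> hs; have [d hd hdd] := hex hs.
have hdr : d <= r by apply: le_r.
have hpd : p s d <= 4 * k - 3 by apply: prange => //; lia.
have -> : DD s = mkv d (p s d) |: fset (p s.+1).
  apply/setP => u; rewrite in_DD in_setU1 in_fset.
  case: (eqVneq u (mkv d (p s d))) => [->|ud] /=.
    by rewrite mkv1 // mkv2 // eqxx hd.
  case: (boolP (0 < u.1 <= r.-1)) => //= hu.
  case: (eqVneq (u.2 : nat) (p s.+1 u.1)) => E; first by rewrite orbT.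
  rewrite orbF; apply/negbTE/negP => /eqP E2; apply: (negP ud); apply/eqP.
  case: (eqVneq (u.1 : nat) d) => [E3|E3].
    2: by have h := huq hs hdd E3; move/eqP: E => E; exfalso; apply: E; rewrite E2 h.
  by apply: vtx_eq; rewrite ?mkv1 ?mkv2 // -E3.
rewrite cardsU1 card_fset; last by move=> x hx; apply: prange => //; lia.
have -> : (mkv d (p s d) \in fset (p s.+1)) = false.
  by rewrite in_fset mkv1 // mkv2 // hd /=; apply/negbTE.
lia.
Qed.

Lemma SS_card s : s < T -> #|SSs s| = r.+1.
Proof.
move=> hs; have -> : SSs s = vx |: DD s.
  apply/setP => u; rewrite in_setU1; case: (eqVneq u vx) => [->|uv] /=; first exact: vx_SS.
  apply/idP/idP; [by move/SS_DD; apply | exact: DD_SS].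
rewrite cardsU1 DD_card //.
have -> : (vx \in DD s) = false by apply/negP => /DD_nvx; rewrite eqxx.
done.
Qed.


Lemma adj_cover i j : i <= T -> j <= T -> i = j.+1 \/ j = i.+1 ->
  exists s, s < T /\ ee i \subset SSs s /\ ee j \subset SSs s.
Proof.
move=> hi hj [E|E].
  exists j; split; first by lia.
  by rewrite /SSs E subsetUr subsetUl.
exists i; split; first by lia.
by rewrite /SSs E subsetUr subsetUl.
Qed.

Lemma tri y1 y2 y3 : y1 != vx -> y2 != vx -> y3 != vx ->
  (y1.1 : nat) = y2.1 -> (y1.1 : nat) = y3.1 ->
  (y1.2 : nat) <> y2.2 -> (y1.2 : nat) <> y3.2 -> (y2.2 : nat) <> y3.2 ->
  (exists s, s < T /\ y1 \in SSs s /\ y2 \in SSs s) ->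
  (exists s, s < T /\ y1 \in SSs s /\ y3 \in SSs s) ->
  (exists s, s < T /\ y2 \in SSs s /\ y3 \in SSs s) -> False.
Proof.
move=> v1 v2 v3 e12 e13 n12 n13 n23 [s [hs [h1 h2]]] [s' [hs' [h1' h3]]] [s'' [hs'' [h2' h3']]].
have [_ _ c12] := ss_two hs h1 h2 v1 v2 e12 n12.
have [_ _ c13] := ss_two hs' h1' h3 v1 v3 e13 n13.
have e23 : (y2.1 : nat) = y3.1 by rewrite -e12.
have [_ _ c23] := ss_two hs'' h2' h3' v2 v3 e23 n23.
lia.
Qed.

Lemma odd_cons (a b : nat) : odd a -> odd b -> a = b.+1 \/ b = a.+1 -> False.
Proof. lia. Qed.

Lemma square a b c x : a != vx -> b != vx -> c != vx -> x != vx ->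
  (a.1 : nat) = b.1 -> (c.1 : nat) = x.1 -> (a.1 : nat) <> c.1 ->
  (a.2 : nat) <> b.2 -> (c.2 : nat) <> x.2 ->
  (exists s, s < T /\ [/\ a \in SSs s, b \in SSs s & c \in SSs s]) ->
  let Ha := exists s, s < T /\ [/\ b \in SSs s, c \in SSs s & x \in SSs s] in
  let Hb := exists s, s < T /\ [/\ a \in SSs s, c \in SSs s & x \in SSs s] in
  let Hc := exists s, s < T /\ [/\ a \in SSs s, b \in SSs s & x \in SSs s] in
  (Ha /\ Hb) \/ (Hc /\ (Ha \/ Hb)) -> False.
Proof.
move=> av bv cv xv eab ecx eac nab ncx [s1 [hs1 [a1 b1 c1]]] Ha Hb Hc Hav.
have ltgt : (a.1 : nat) < c.1 \/ (c.1 : nat) < a.1 by lia.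
have [hd1 hm1 hc1] := ss_two hs1 a1 b1 av bv eab nab.
have hdr1 : 0 < a.1 <= r.-1.
  by have [/eqP|[h _]] := in_SSs a1; [rewrite (negPf av) | ].
have hdr2 : 0 < c.1 <= r.-1.
  by have [/eqP|[h _]] := in_SSs c1; [rewrite (negPf cv) | ].
have pc1 : (c.2 : nat) = p s1 c.1 by apply: (ss_pos hs1 c1 cv hd1); apply/eqP => E; apply: eac; by rewrite E.
have HA : Ha -> exists s, [/\ s < T, p s c.1 != p s.+1 c.1,
    minn c.2 x.2 = minn (p s c.1) (p s.+1 c.1), ((c.2 : nat) = (x.2).+1 \/ (x.2 : nat) = (c.2).+1)
    & (b.2 : nat) = p s a.1].
  move=> [s [hs [b2 c2 x2]]]; have [h1 h2 h3] := ss_two hs c2 x2 cv xv ecx ncx.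
  exists s; split => //; rewrite eab; apply: (ss_pos hs b2 bv h1); apply/eqP => E; apply: eac; by rewrite eab E.
have HB : Hb -> exists s, [/\ s < T, p s c.1 != p s.+1 c.1,
    minn c.2 x.2 = minn (p s c.1) (p s.+1 c.1), ((c.2 : nat) = (x.2).+1 \/ (x.2 : nat) = (c.2).+1)
    & (a.2 : nat) = p s a.1].
  move=> [s [hs [a2 c2 x2]]]; have [h1 h2 h3] := ss_two hs c2 x2 cv xv ecx ncx.
  exists s; split => //; apply: (ss_pos hs a2 av h1); by apply/eqP.
have HC : Hc -> exists s, [/\ s < T, p s a.1 != p s.+1 a.1,
    minn a.2 b.2 = minn (p s a.1) (p s.+1 a.1) & (x.2 : nat) = p s c.1].
  move=> [s [hs [a2 b2 x2]]]; have [h1 h2 h3] := ss_two hs a2 b2 av bv eab nab.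
  exists s; split => //; rewrite ecx; apply: (ss_pos hs x2 xv h1); apply/eqP => E; apply: eac; by rewrite ecx E.
case: ltgt => [lt|gt].
- case: Hav => [[/HA [sa [hsa hda hma hca pba]] /HB [sb [hsb hdb hmb hcb pab]]]|[/HC [sc [hsc hdc hmc pxc]] hab]].
    have E : minn (p sa c.1) (p sa.+1 c.1) = minn (p sb c.1) (p sb.+1 c.1) by rewrite -hma -hmb.
    have := hlow hsa hsb hda hdb E lt => E2; apply: nab; by rewrite pab pba E2.
  have o1 := hodd hs1 hd1 lt (proj2 (andP hdr2)).
  have o2 := hodd hsc hdc lt (proj2 (andP hdr2)).
  rewrite -pc1 in o1; rewrite -pxc in o2.
  by case: hab => [/HA [sa [_ _ _ hca _]]|/HB [sb [_ _ _ hca _]]]; apply: (odd_cons o1 o2).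
- case: Hav => [[/HA [sa [hsa hda hma hca pba]] /HB [sb [hsb hdb hmb hcb pab]]]|[/HC [sc [hsc hdc hmc pxc]] hab]].
    have o1 := hodd hsa hda gt (proj2 (andP hdr1)).
    have o2 := hodd hsb hdb gt (proj2 (andP hdr1)).
    rewrite -pba in o1; rewrite -pab in o2.
    by apply: (odd_cons o2 o1).
  have E : minn (p s1 a.1) (p s1.+1 a.1) = minn (p sc a.1) (p sc.+1 a.1) by rewrite -hm1 -hmc.
  have E2 := hlow hs1 hsc hd1 hdc E gt; apply: ncx; by rewrite pc1 pxc E2.
Qed.


Lemma in_DD_mkv s d a : 0 < d <= r.-1 -> a <= 4 * k - 3 -> (a = p s d \/ a = p s.+1 d) ->
  mkv d a \in DD s.
Proof.
move=> hd ha h; rewrite in_DD mkv1 ?mkv2 //; last by lia.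
by rewrite hd /=; case: h => ->; rewrite eqxx ?orbT.
Qed.

Lemma other_part d : 0 < d <= r.-1 -> exists2 z, 0 < z <= r.-1 & z != d.
Proof.
move=> hd; exists (if d == 1 then 2 else 1); first by case: eqP => E; lia.
by case: (eqVneq d 1) => E; apply/eqP; lia.
Qed.

Lemma fset_ee q j : fset q \subset fset (p j) -> fset q \subset ee j.
Proof. by move=> h; apply: subset_trans h _; apply/subsetP => u hu; rewrite in_ee hu orbT. Qed.

Lemma in_ee_f u j : u \in fset (p j) -> u \in ee j.
Proof. by move=> hu; rewrite in_ee hu orbT. Qed.

Definition other (a0 a1 y : nat) := if y == a0 then a1 else a0.

Lemma other_in a0 a1 y : other a0 a1 y = a0 \/ other a0 a1 y = a1.
Proof. rewrite /other; case: eqP; tauto. Qed.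

Lemma other_neq a0 a1 y : a0 != a1 -> (y = a0 \/ y = a1) -> other a0 a1 y <> y.
Proof. rewrite /other => /eqP h1 h2; case: (eqVneq y a0) => E; lia. Qed.

Lemma other_eq a0 a1 y u : (y = a0 \/ y = a1) -> (u = a0 \/ u = a1) -> a0 != a1 -> u <> y ->
  u = other a0 a1 y.
Proof. rewrite /other => h1 h2 /eqP h3 h4; case: (eqVneq y a0) => E; lia. Qed.

Lemma closeA (e : {set V}) (w : V) : e \subset WW -> #|e| = r -> w \in WW -> w \notin e ->
  (forall x : V, x \in e -> exists s, s < T /\ (((w |: e) :\ x) \subset SSs s)) ->
  exists s, s < T /\ ((w |: e) \subset SSs s).
Proof.
move=> heW hce hwW hwe hyp.
have hS : forall x, x \in e -> exists s, s < T /\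
    forall u, u \in w |: e -> u != x -> u \in SSs s.
  move=> x hx; have [s [hs /subsetP hsub]] := hyp x hx; exists s; split => // u hu ux.
  by apply: hsub; rewrite in_setD1 ux hu.
case: (boolP (vx \in e)) => hve.
  have [s [hs hsub]] := hS vx hve; exists s; split => //.
  apply/subsetP => u hu; case: (eqVneq u vx) => [->|uv]; [exact: vx_SS | exact: hsub].
have eU : forall u, u \in e -> u != vx /\ 0 < u.1 <= r.-1 /\ 0 < u.2 <= 4 * k - 3.
  move=> u hu; have [E|[h1 h2]] := in_W (subsetP heW u hu).
    by rewrite -E hu in hve.
  split => //; apply/eqP => E; by rewrite -E hu in hve.
have [x1 hx1] : exists x1, x1 \in e.
  have : 0 < #|e| by rewrite hce; apply: leq_trans hr.
  by rewrite card_gt0 => /set0Pn.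
have [s1 [hs1 h1]] := hS x1 hx1.
have [d hd hdd] := hex hs1.
have [x1v [hx1r hx1v]] := eU x1 hx1.
have pr0 : forall x, 0 < x <= r.-1 -> p s1 x <= 4 * k - 3 by move=> x hx; apply: prange => //; apply: ltnW.
have pr1 : forall x, 0 < x <= r.-1 -> p s1.+1 x <= 4 * k - 3 by move=> x hx; apply: prange.
have hdr : d <= r by apply: le_r.
set a := mkv d (p s1 d); set b := mkv d (p s1.+1 d).
have aD : a \in DD s1 by apply: in_DD_mkv => //; [apply: pr0 | left].
have bD : b \in DD s1 by apply: in_DD_mkv => //; [apply: pr1 | right].
have a1 : (a.1 : nat) = d by rewrite mkv1.
have b1 : (b.1 : nat) = d by rewrite mkv1.
have a2 : (a.2 : nat) = p s1 d by rewrite mkv2 //; apply: pr0.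
have b2 : (b.2 : nat) = p s1.+1 d by rewrite mkv2 //; apply: pr1.
have nab : (a.2 : nat) <> b.2 by rewrite a2 b2; apply/eqP.
have cab := hcons hs1 hdd.
case: (eqVneq w vx) => hwv.
- subst w.
  have he1 : forall u, u \in e -> u != x1 -> u \in DD s1.
    move=> u hu ux; apply: SS_DD; last by case: (eU u hu).
    by apply: h1 => //; rewrite in_setU1 hu orbT.
  have ce1 : #|e :\ x1| = r.-1.
    by have := cardsD1 x1 e; rewrite hce hx1 add1n => E; rewrite [in RHS]E.
  have [y1 y1D y1n] : exists2 y1, y1 \in DD s1 & y1 \notin e :\ x1.
    apply/subsetPn; apply/negP => hsub; have := subset_leq_card hsub.
    by rewrite DD_card // ce1 => /r_pred.
  have eq2 : e :\ x1 = DD s1 :\ y1.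
    apply/eqP; rewrite eqEcard; apply/andP; split.
      apply/subsetP => u hu; rewrite in_setD1; apply/andP; split.
        by apply/eqP => E; rewrite -E hu in y1n.
      by move: hu; rewrite in_setD1 => /andP [ux hu]; apply: he1.
    by have := cardsD1 y1 (DD s1); rewrite y1D DD_card // ce1 add1n => E; rewrite [in X in _ <= X]E.
  have hmem : forall u, u \in DD s1 -> u != y1 -> u \in e /\ u != x1.
    move=> u hu uy; have : u \in DD s1 :\ y1 by rewrite in_setD1 uy hu.
    by rewrite -eq2 in_setD1 => /andP [ux ue].
  have hSx : forall u, u \in vx |: e -> u = vx \/ u \in e.
    by move=> u; rewrite in_setU1 => /orP [/eqP ->|]; [left|right].
  case: (eqVneq y1 x1) => hy1x1.
    exists s1; split => //; apply/subsetP => u /hSx [->|ue]; first exact: vx_SS.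
    case: (eqVneq u x1) => [->|ux]; first by rewrite -hy1x1; apply: DD_SS.
    by apply: DD_SS; apply: he1.
  have nx1y1 : x1 != y1 by rewrite eq_sym.
  have x1D : x1 \notin DD s1 by apply/negP => /hmem /(_ nx1y1) [_]; rewrite eqxx.
  have [hx1n0 hx1n1] : (x1.2 : nat) <> p s1 x1.1 /\ (x1.2 : nat) <> p s1.+1 x1.1.
    by move: x1D; rewrite in_DD hx1r /=; case: eqP => //; case: eqP.
  have y1v := DD_nvx y1D.
  have [y1r y1val] : 0 < y1.1 <= r.-1 /\ ((y1.2 : nat) = p s1 y1.1 \/ (y1.2 : nat) = p s1.+1 y1.1).
    by move: y1D; rewrite in_DD => /andP [h /orP [/eqP|/eqP]]; tauto.
  have hx1S : x1 \in vx |: e by rewrite in_setU1 hx1 orbT.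
  have eS : forall u, u \in e -> u \in vx |: e by move=> u hu; rewrite in_setU1 hu orbT.
  have hx1dr : (x1.1 : nat) <= r by apply: le_r.
  have cv0 : forall u, u \in fset (p s1) -> u != vx := fun u => @fset_nvx _ u.
  case: (eqVneq (y1.1 : nat) d) => hy1d.
  + pose j1 := if (y1.2 == p s1 d :> nat) then s1.+1 else s1.
    have hj1T : j1 <= T by rewrite /j1; case: eqP => _ //; apply: ltnW.
    have hj1a : forall x, x != d -> p j1 x = p s1 x.
      by move=> x xd; rewrite /j1; case: eqP => _ //; rewrite (huq hs1 hdd xd).
    have hj1d : p j1 d = other (p s1 d) (p s1.+1 d) y1.2.
      by rewrite /j1 /other; case: eqP.
    have y1d : (y1.2 : nat) = p s1 d \/ (y1.2 : nat) = p s1.+1 d by rewrite -hy1d.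
    have fj1 : forall u, u \in fset (p j1) -> u \in e /\ u != x1.
      move=> u; rewrite in_fset => /andP [ur /eqP uv]; apply: hmem.
        rewrite in_DD ur /=; case: (eqVneq (u.1 : nat) d) => [E|E].
          by rewrite uv E hj1d; have := other_in (p s1 d) (p s1.+1 d) y1.2; case=> ->; rewrite eqxx ?orbT.
        by rewrite uv hj1a // eqxx.
      apply/eqP => E; move: uv; rewrite E hy1d hj1d; move=> E2; exact: (other_neq hdd y1d (esym E2)).
    have ej1 : forall u, u \in e -> u = x1 \/ u \in fset (p j1).
      move=> u ue; case: (eqVneq u x1) => [->|ux]; [by left|right].
      have uD := he1 u ue ux.
      have uy : u != y1 by apply/eqP => E; rewrite -E in y1n; rewrite in_setD1 ux ue in y1n.
      move: uD; rewrite in_DD in_fset => /andP [ur uval]; rewrite ur /=.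
      case: (eqVneq (u.1 : nat) d) => [E|E]; last first.
        by rewrite hj1a //; rewrite -(huq hs1 hdd E) orbb in uval.
      have uo : (u.2 : nat) = p s1 d \/ (u.2 : nat) = p s1.+1 d.
        by move: uval; rewrite E => /orP [/eqP|/eqP]; [left|right].
      have uny : (u.2 : nat) <> y1.2.
        by move=> E2; move/eqP: uy; apply; apply: vtx_eq; rewrite ?E ?hy1d.
      by rewrite E hj1d; apply/eqP; apply: (other_eq y1d uo hdd uny).
    set c := mkv x1.1 (p j1 x1.1).
    have cF : c \in fset (p j1) by apply: fset_mkv => //; apply: prange.
    have [ce cn] := fj1 c cF.
    have c1 : (c.1 : nat) = x1.1 by rewrite mkv1.
    have c2 : (c.2 : nat) = p j1 x1.1 by rewrite mkv2 //; apply: prange.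
    have cv : c != vx := fset_nvx cF.
    pose q2 := fun x : nat => if x == (x1.1 : nat) then (x1.2 : nat) else p j1 x.
    have [s2 [hs2 h2]] := hS c ce.
    have q2sub : fset q2 \subset SSs s2.
      apply/subsetP => u; rewrite in_fset => /andP [ur /eqP uv].
      case: (eqVneq (u.1 : nat) x1.1) => E.
        have E2 : (u.2 : nat) = x1.2 by rewrite uv /q2 E eqxx.
        have -> : u = x1 by apply: vtx_eq.
        by apply: h2 => //; rewrite eq_sym.
      have E2 : (u.2 : nat) = p j1 u.1 by rewrite uv /q2 (negPf E).
      have uF : u \in fset (p j1) by rewrite in_fset ur E2 eqxx.
      have [ue _] := fj1 u uF.
      apply: h2; first exact: eS.
      by apply/eqP => E3; move/eqP: E; apply; rewrite E3 c1.
    have hq2 : forall x, 0 < x <= r.-1 -> q2 x <= 4 * k - 3.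
      by move=> x hx; rewrite /q2; case: eqP => _; [case/andP: hx1v | apply: prange].
    have [j2 [hj2 e2]] := pt_in hs2 hq2 q2sub.
    have hj2T : j2 <= T by case: hj2 => ->; [apply: ltnW | ].
    have [z hz zx] := other_part hx1r.
    set y := mkv z (p j1 z).
    have yF : y \in fset (p j1) by apply: fset_mkv => //; apply: prange.
    have [ye yn] := fj1 y yF.
    have y1' : (y.1 : nat) = z by rewrite mkv1 //; apply: le_r.
    have cy : c != y by apply/eqP => E; move/eqP: zx; rewrite -y1' -E c1.
    have x1y : x1 != y by apply/eqP => E; move/eqP: zx; rewrite -y1' -E.
    have [s3 [hs3 h3]] := hS y ye.
    have cS3 : c \in SSs s3 by apply: h3 => //; apply: eS.
    have x1S3 : x1 \in SSs s3 by apply: h3.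
    have ncx : (c.2 : nat) <> x1.2 by move=> E; move/eqP: cn; apply; apply: vtx_eq.
    have [_ _ ccons] := ss_two hs3 cS3 x1S3 cv x1v c1 ncx.
    have adj : j1 = j2.+1 \/ j2 = j1.+1.
      apply: (hadj hj1T hj2T hx1r).
        by move=> x hx xn; rewrite -e2 // /q2 (negPf xn).
      by rewrite -e2 // /q2 eqxx -c2.
    have [s [hs [sub1 sub2]]] := adj_cover hj1T hj2T adj.
    exists s; split => //; apply/subsetP => u /hSx [->|ue]; first exact: vx_SS.
    case: (ej1 u ue) => [->|uF].
      by apply: (subsetP sub2); apply: in_ee_f; rewrite in_fset hx1r /= -e2 // /q2 eqxx.
    by apply: (subsetP sub1); apply: in_ee_f.
  + have y1eq : p s1 y1.1 = p s1.+1 y1.1 := huq hs1 hdd hy1d.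
    have y1v0 : (y1.2 : nat) = p s1 y1.1 by case: y1val => ->; rewrite ?y1eq.
    have ay : a != y1 by apply/eqP => E; move/eqP: hy1d; rewrite -E a1.
    have by' : b != y1 by apply/eqP => E; move/eqP: hy1d; rewrite -E b1.
    have [ae ax] := hmem a aD ay; have [be bx] := hmem b bD by'.
    have av := DD_nvx aD; have bv := DD_nvx bD.
    have nx1a : x1 != a by rewrite eq_sym.
    have nx1b : x1 != b by rewrite eq_sym.
    have neab : a != b by apply/eqP => E; apply: nab; rewrite E.
    have nba : b != a by rewrite eq_sym.
    have eD : forall u, u \in e -> u != x1 -> u \in DD s1 /\ (u.1 : nat) != y1.1.
      move=> u ue ux; have uD := he1 u ue ux; split => //.
      have uy : u != y1 by apply/eqP => E; rewrite -E in y1n; rewrite in_setD1 ux ue in y1n.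
      apply/eqP => E; move/eqP: uy; apply; apply: vtx_eq => //.
      by move: uD; rewrite in_DD E -y1eq -y1v0 orbb => /andP [_ /eqP].
    have pairD : forall u, u \in DD s1 -> (u.1 : nat) != y1.1 -> u \in e /\ u != x1.
      move=> u uD uz; apply: hmem => //; apply/eqP => E; by rewrite E eqxx in uz.
    case: (eqVneq (x1.1 : nat) y1.1) => hxz.
    * pose qa := fun x : nat => if x == (y1.1 : nat) then (x1.2 : nat) else p s1.+1 x.
      pose qb := fun x : nat => if x == (y1.1 : nat) then (x1.2 : nat) else p s1 x.
      have hdz : (d == y1.1) = false by apply/eqP => E; move/eqP: hy1d; rewrite E.
      have [sa [hsa ha]] := hS a ae.
      have [sb [hsb hb]] := hS b be.
      have qasub : fset qa \subset SSs sa.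
        apply/subsetP => u; rewrite in_fset => /andP [ur /eqP uv].
        case: (eqVneq (u.1 : nat) y1.1) => E.
          have E2 : (u.2 : nat) = x1.2 by rewrite uv /qa E eqxx.
          have -> : u = x1 by apply: vtx_eq; rewrite // E.
          by apply: ha.
        have E2 : (u.2 : nat) = p s1.+1 u.1 by rewrite uv /qa (negPf E).
        have uD : u \in DD s1 by rewrite in_DD ur E2 eqxx orbT.
        have [ue _] := pairD u uD E.
        apply: ha; first exact: eS.
        apply/eqP => E3; rewrite E3 a2 a1 in E2; by rewrite E2 eqxx in hdd.
      have qbsub : fset qb \subset SSs sb.
        apply/subsetP => u; rewrite in_fset => /andP [ur /eqP uv].
        case: (eqVneq (u.1 : nat) y1.1) => E.
          have E2 : (u.2 : nat) = x1.2 by rewrite uv /qb E eqxx.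
          have -> : u = x1 by apply: vtx_eq; rewrite // E.
          by apply: hb.
        have E2 : (u.2 : nat) = p s1 u.1 by rewrite uv /qb (negPf E).
        have uD : u \in DD s1 by rewrite in_DD ur E2 eqxx.
        have [ue _] := pairD u uD E.
        apply: hb; first exact: eS.
        apply/eqP => E3; rewrite E3 b2 b1 in E2; by rewrite E2 eqxx in hdd.
      have hqa : forall x, 0 < x <= r.-1 -> qa x <= 4 * k - 3.
        by move=> x hx; rewrite /qa; case: eqP => _; [case/andP: hx1v | apply: pr1].
      have hqb : forall x, 0 < x <= r.-1 -> qb x <= 4 * k - 3.
        by move=> x hx; rewrite /qb; case: eqP => _; [case/andP: hx1v | apply: pr0].
      have [ja [hja ea]] := pt_in hsa hqa qasub.
      have [jb [hjb eb]] := pt_in hsb hqb qbsub.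
      have hjaT : ja <= T by case: hja => ->; [apply: ltnW | ].
      have hjbT : jb <= T by case: hjb => ->; [apply: ltnW | ].
      have adj : ja = jb.+1 \/ jb = ja.+1.
        apply: (hadj hjaT hjbT hd).
          move=> x hx xd; rewrite -ea // -eb // /qa /qb; case: eqP => // _.
          by rewrite (huq hs1 hdd xd).
        by rewrite -ea // -eb // /qa /qb hdz; case: cab; [right|left].
      have [s [hs [sub1 sub2]]] := adj_cover hjaT hjbT adj.
      exists s; split => //; apply/subsetP => u /hSx [->|ue]; first exact: vx_SS.
      case: (eqVneq u x1) => [->|ux].
        by apply: (subsetP sub1); apply: in_ee_f; rewrite in_fset hx1r /= -ea // /qa hxz eqxx.
      have [uD uz] := eD u ue ux.
      move: uD; rewrite in_DD => /andP [ur /orP [/eqP uv|/eqP uv]].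
        by apply: (subsetP sub2); apply: in_ee_f; rewrite in_fset ur /= -eb // /qb (negPf uz) uv.
      by apply: (subsetP sub1); apply: in_ee_f; rewrite in_fset ur /= -ea // /qa (negPf uz) uv.
    * have [sa [hsa ha]] := hS a ae.
      have [sb [hsb hb]] := hS b be.
      case: (eqVneq (x1.1 : nat) d) => hx1d.
      - have eab : (a.1 : nat) = b.1 by rewrite a1 ?b1.
        have eax : (a.1 : nat) = x1.1 by rewrite a1 hx1d.
        have H12 : exists s, s < T /\ a \in SSs s /\ b \in SSs s.
          by exists s1; split => //; split; apply: DD_SS.
        have H13 : exists s, s < T /\ a \in SSs s /\ x1 \in SSs s.
          by exists sb; split => //; split; [apply: hb => //; apply: eS | apply: hb].
        have H23 : exists s, s < T /\ b \in SSs s /\ x1 \in SSs s.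
          by exists sa; split => //; split; [apply: ha => //; apply: eS | apply: ha].
        have nxa : (a.2 : nat) <> x1.2 by rewrite a2 -hx1d => E; apply: hx1n0.
        have nxb : (b.2 : nat) <> x1.2 by rewrite b2 -hx1d => E; apply: hx1n1.
        exfalso; exact: (tri av bv x1v eab eax nab nxa nxb H12 H13 H23).
      - set c := mkv x1.1 (p s1.+1 x1.1).
        have cD : c \in DD s1 by apply: in_DD_mkv => //; [apply: pr1 | right].
        have c1 : (c.1 : nat) = x1.1 by rewrite mkv1.
        have c2 : (c.2 : nat) = p s1.+1 x1.1 by rewrite mkv2 //; apply: pr1.
        have cz : (c.1 : nat) != y1.1 by rewrite c1.
        have [ce cn] := pairD c cD cz.
        have cv := DD_nvx cD.
        have eab : (a.1 : nat) = b.1 by rewrite a1 ?b1.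
        have eac : (a.1 : nat) <> c.1 by rewrite a1 c1 => E; move/eqP: hx1d; rewrite E.
        have ncx : (c.2 : nat) <> x1.2 by rewrite c2 => E; apply: hx1n1; rewrite E.
        have Hx : exists s, s < T /\ [/\ a \in SSs s, b \in SSs s & c \in SSs s].
          by exists s1; split => //; split; apply: DD_SS.
        have nca : c != a by apply/eqP => E; apply: eac; rewrite E.
        have ncb : c != b by apply/eqP => E; apply: eac; rewrite E eab.
        exfalso; apply: (square av bv cv x1v eab c1 eac nab ncx Hx); cbv zeta.
        left; split.
          by exists sa; split => //; split; [apply: ha => //; apply: eS | apply: ha => //; apply: eS | apply: ha].
        by exists sb; split => //; split; [apply: hb => //; apply: eS | apply: hb => //; apply: eS | apply: hb].
have inSe : forall u, u \in w |: e -> u = w \/ u \in e.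
  by move=> u; rewrite in_setU1 => /orP [/eqP ->|]; [left|right].
have Sv : forall u, u \in w |: e -> u != vx.
  by move=> u /inSe [->|/eU [] //].
have hSD : forall u, u \in w |: e -> u != x1 -> u \in DD s1.
  by move=> u hu ux; apply: SS_DD; [apply: h1 | apply: Sv].
have cardS : #|w |: e| = r.+1 by rewrite cardsU1 hwe hce.
have eqD : (w |: e) :\ x1 = DD s1.
  apply/eqP; rewrite eqEcard; apply/andP; split.
    by apply/subsetP => u; rewrite in_setD1 => /andP [ux hu]; apply: hSD.
  rewrite DD_card //; have := cardsD1 x1 (w |: e).
  by rewrite cardS in_setU1 hx1 orbT /= add1n => -[<-].
have hDS : forall u, u \in DD s1 -> u \in w |: e /\ u != x1.
  by move=> u; rewrite -eqD in_setD1 => /andP [ux hu].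
have x1D : x1 \notin DD s1 by apply/negP => /hDS [_]; rewrite eqxx.
have [hx1n0 hx1n1] : (x1.2 : nat) <> p s1 x1.1 /\ (x1.2 : nat) <> p s1.+1 x1.1.
  by move: x1D; rewrite in_DD hx1r /=; case: eqP => //; case: eqP.
have [aS an] := hDS a aD; have [bS bn] := hDS b bD.
have av := DD_nvx aD; have bv := DD_nvx bD.
have neab : a != b by apply/eqP => E; apply: nab; rewrite E.
have nba : b != a by rewrite eq_sym.
have nx1a : x1 != a by rewrite eq_sym.
have nx1b : x1 != b by rewrite eq_sym.
have av3 : forall y u1 u2 u3, y \in e -> u1 \in w |: e -> u2 \in w |: e -> u3 \in w |: e ->
    u1 != y -> u2 != y -> u3 != y ->
    exists s, s < T /\ [/\ u1 \in SSs s, u2 \in SSs s & u3 \in SSs s].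
  move=> y u1 u2 u3 ye hu1 hu2 hu3 n1 n2 n3; have [s [hs hh]] := hS y ye.
  by exists s; split => //; split; apply: hh.
case: (eqVneq (x1.1 : nat) d) => hx1d.
- have [z hz zd] := other_part hd.
  set c := mkv z (p s1.+1 z).
  have cD : c \in DD s1 by apply: in_DD_mkv => //; [apply: pr1 | right].
  have c1 : (c.1 : nat) = z by rewrite mkv1 //; apply: le_r.
  have [cS cn] := hDS c cD.
  have nca : a != c by apply/eqP => E; move/eqP: zd; rewrite -c1 -E a1.
  have ncb : b != c by apply/eqP => E; move/eqP: zd; rewrite -c1 -E b1.
  have nxa : (x1.2 : nat) <> a.2 by rewrite a2 -hx1d.
  have nxb : (x1.2 : nat) <> b.2 by rewrite b2 -hx1d.
  have hx1S : x1 \in w |: e by rewrite in_setU1 hx1 orbT.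
  have nx1c : x1 != c by rewrite eq_sym.
  case: (boolP (c \in e)) => ce.
    have [s2 [hs2 [a3 b3 x3]]] := av3 c a b x1 ce aS bS hx1S nca ncb nx1c.
    have eab : (a.1 : nat) = b.1 by rewrite a1 ?b1.
    have eax : (a.1 : nat) = x1.1 by rewrite a1 hx1d.
    exfalso; apply: (ss_three hs2 a3 b3 x3 av bv x1v eab eax nab) => E; [apply: nxa | apply: nxb]; by rewrite E.
  have cw : c = w by case: (inSe c cS) => // ce'; rewrite ce' in ce.
  have ae : a \in e by case: (inSe a aS) => // E; move/eqP: nca; rewrite cw E.
  have be : b \in e by case: (inSe b bS) => // E; move/eqP: ncb; rewrite cw E.
  have eab : (a.1 : nat) = b.1 by rewrite a1 ?b1.
  have eax : (a.1 : nat) = x1.1 by rewrite a1 hx1d.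
  have H12 : exists s, s < T /\ a \in SSs s /\ b \in SSs s.
    by exists s1; split => //; split; apply: DD_SS.
  have H13 : exists s, s < T /\ a \in SSs s /\ x1 \in SSs s.
    have [s [hs [u1 u2 _]]] := av3 b a x1 x1 be aS hx1S hx1S neab nx1b nx1b.
    by exists s.
  have H23 : exists s, s < T /\ b \in SSs s /\ x1 \in SSs s.
    have [s [hs [u1 u2 _]]] := av3 a b x1 x1 ae bS hx1S hx1S nba nx1a nx1a.
    by exists s.
  exfalso; apply: (tri av bv x1v eab eax nab _ _ H12 H13 H23) => E; [apply: nxa | apply: nxb]; by rewrite E.
have hx1dr : (x1.1 : nat) <= r by apply: le_r.
set c := mkv x1.1 (p s1.+1 x1.1).
have cD : c \in DD s1 by apply: in_DD_mkv => //; [apply: pr1 | right].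
have c1 : (c.1 : nat) = x1.1 by rewrite mkv1.
have c2 : (c.2 : nat) = p s1.+1 x1.1 by rewrite mkv2 //; apply: pr1.
have [cS cn] := hDS c cD.
have hx1S : x1 \in w |: e by rewrite in_setU1 hx1 orbT.
have nca : a != c by apply/eqP => E; move/eqP: hx1d; rewrite -c1 -E a1.
have ncb : b != c by apply/eqP => E; move/eqP: hx1d; rewrite -c1 -E b1.
have nx1c : x1 != c by rewrite eq_sym.
have nac : c != a by rewrite eq_sym.
have nbc : c != b by rewrite eq_sym.
have cv := DD_nvx cD.
have eab : (a.1 : nat) = b.1 by rewrite a1 ?b1.
have eac : (a.1 : nat) <> c.1 by rewrite a1 c1 => E; move/eqP: hx1d; rewrite E.
have ncx : (c.2 : nat) <> x1.2 by rewrite c2 => E; apply: hx1n1; rewrite E.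
have Hx : exists s, s < T /\ [/\ a \in SSs s, b \in SSs s & c \in SSs s].
  by exists s1; split => //; split; apply: DD_SS.
exfalso; apply: (square av bv cv x1v eab c1 eac nab ncx Hx); cbv zeta.
case: (boolP (a \in e)) => ae; case: (boolP (b \in e)) => be.
- left; split.
    exact: av3 a b c x1 ae bS cS hx1S nba nac nx1a.
  exact: av3 b a c x1 be aS cS hx1S neab nbc nx1b.
- have bw : b = w by case: (inSe b bS) => // E; rewrite E in be.
  have ce : c \in e by case: (inSe c cS) => // E; move/eqP: ncb; rewrite bw E.
  right; split.
    exact: av3 c a b x1 ce aS bS hx1S nca ncb nx1c.
  left; exact: av3 a b c x1 ae bS cS hx1S nba nac nx1a.
- have aw : a = w by case: (inSe a aS) => // E; rewrite E in ae.
  have ce : c \in e by case: (inSe c cS) => // E; move/eqP: nca; rewrite aw E.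
  right; split.
    exact: av3 c a b x1 ce aS bS hx1S nca ncb nx1c.
  right; exact: av3 b a c x1 be aS cS hx1S neab nbc nx1b.
- have aw : a = w by case: (inSe a aS) => // E; rewrite E in ae.
  have bw : b = w by case: (inSe b bS) => // E; rewrite E in be.
  by move/eqP: neab; rewrite aw bw.
Qed.


Definition Kset : {set {set V}} :=
  [set f : {set V} | [exists s : 'I_T, (f \subset SSs s) && (#|f| == r)]].
Definition Eset (P : nat -> bool) : {set {set V}} :=
  [set f : {set V} | [exists j : 'I_T.+1, P j && (f == ee j)]].
Definition GG P := Kset :\: Eset P.

Lemma in_Kset (f : {set V}) : reflect (exists s, s < T /\ f \subset SSs s /\ #|f| = r) (f \in Kset).
Proof.
rewrite inE; apply: (iffP existsP) => [[s /andP [h1 /eqP h2]]|[s [hs [h1 h2]]]].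
  by exists s; split => //; apply: ltn_ord.
by exists (Ordinal hs); rewrite h1 h2 eqxx.
Qed.

Lemma in_Eset (f : {set V}) (P : nat -> bool) : reflect (exists j, [/\ j <= T, P j & f = ee j]) (f \in Eset P).
Proof.
rewrite inE; apply: (iffP existsP) => [[j /andP [h1 /eqP h2]]|[j [hj h1 h2]]].
  by exists j; split => //; rewrite -ltnS; apply: ltn_ord.
have hj' : j < T.+1 by rewrite ltnS.
by exists (Ordinal hj'); rewrite /= h1 h2 eqxx.
Qed.

Lemma ee_inj i j : i <= T -> j <= T -> ee i = ee j -> i = j.
Proof.
move=> hi hj E; apply: hinj => // d hd.
have hm := fset_mkv hd (prange hi hd).
have : mkv d (p i d) \in ee j by rewrite -E; apply: in_ee_f.
rewrite in_ee (negPf (fset_nvx hm)) /= in_fset mkv1 ?mkv2 ?hd /=; [by move/eqP | | exact: le_r].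
exact: prange.
Qed.

Lemma ee_K j : j <= T -> ee j \in Kset.
Proof.
move=> hj; apply/in_Kset; rewrite ee_card //.
case: (ltnP j T) => hjT.
  by exists j; split => //; split => //; rewrite /SSs subsetUl.
exists j.-1; split; first by lia.
have -> : j = j.-1.+1 by lia.
by split => //; rewrite /SSs subsetUr.
Qed.

Lemma GG_ext (P Q : nat -> bool) : (forall j, j <= T -> P j = Q j) -> GG P = GG Q.
Proof.
move=> h; apply/setP => f; rewrite /GG !in_setD.
congr (~~ _ && _); apply/idP/idP => /in_Eset [j [hj h1 h2]]; apply/in_Eset; exists j; split => //.
  by rewrite -h.
by rewrite h.
Qed.

Lemma GG_K (f : {set V}) (P : nat -> bool) : f \in GG P -> f \in Kset.
Proof. by rewrite /GG in_setD => /andP []. Qed.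

Lemma GG_diff (P Q : nat -> bool) i0 : i0 <= T -> (forall j, j <= T -> P j = Q j || (j == i0)) -> ~~ Q i0 ->
  GG Q :\: GG P = [set ee i0].
Proof.
move=> hi0 hPQ hQ; apply/setP => f; rewrite in_setD in_set1 /GG !in_setD.
apply/idP/idP.
  move=> /andP [h /andP [hE hK]]; rewrite hK andbT negbK in h.
  case/in_Eset: h => j [hj hPj fE].
  rewrite hPQ // in hPj; case/orP: hPj => [hQj|/eqP E]; last by rewrite fE E.
  by case/negP: hE; apply/in_Eset; exists j.
move/eqP => ->; rewrite ee_K // !andbT negbK.
apply/andP; split.
  apply/in_Eset; exists i0; split => //.
  by rewrite hPQ // eqxx orbT.
apply/negP => /in_Eset [j [hj hQj E]].
by have := ee_inj hi0 hj E => E'; rewrite E' hQj in hQ.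
Qed.

Lemma SS_eq (e : {set V}) (w : V) s : s < T -> #|e| = r -> w \notin e -> w |: e \subset SSs s -> w |: e = SSs s.
Proof.
move=> hs hc hw hsub; apply/eqP; rewrite eqEcard hsub SS_card // cardsU1 hw hc.
by rewrite /= add1n leqnn.
Qed.

Lemma newinf (P : nat -> bool) j s o : s < T -> j <= T -> (j = s /\ o = s.+1 \/ j = s.+1 /\ o = s) -> P j -> ~~ P o ->
  ee j \in [set e | [&& rsubset r WW e, e \notin GG P &
     [exists w in WW :\: e,
        [forall f : {set V},
           [&& f \subset e :|: [set w], #|f| == r & f != e] ==> (f \in GG P)]]]].
Proof.
move=> hs hj hjo hPj hPo.
have hsub : ee j \subset SSs s by case: hjo => [[-> _]|[-> _]]; rewrite /SSs ?subsetUl ?subsetUr.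
have [w hwS hwn] : exists2 w, w \in SSs s & w \notin ee j.
  apply/subsetPn; apply/negP => h; have := subset_leq_card h.
  by rewrite SS_card // ee_card //; rewrite ltnn.
rewrite inE; apply/and3P; split.
- by rewrite /rsubset ee_W // ee_card // eqxx.
- rewrite inE negb_and negbK; apply/orP; left; apply/in_Eset; by exists j.
apply/existsP; exists w; rewrite in_setD hwn (subsetP (SS_W hs)) //=.
apply/forallP => f; apply/implyP => /and3P [hf1 /eqP hf2 hf3].
have hfS : f \subset SSs s.
  apply: subset_trans hf1 _; rewrite subUset hsub sub1set hwS //.
rewrite inE; apply/andP; split; last by apply/in_Kset; exists s.
apply/negP => /in_Eset [l [hl hPl E]].
have hl2 : l = s \/ l = s.+1 by apply: ee_sub => //; rewrite -E.
have ol : l = o.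
  have fj : l != j by apply/eqP => El; move/eqP: hf3; apply; rewrite E El.
  case: hjo => [[E1 E2]|[E1 E2]]; case: hl2 => El; rewrite E2 //; by rewrite El E1 eqxx in fj.
by rewrite -ol hPl in hPo.
Qed.


Definition Pn (P : nat -> bool) := fun j => [&& P j, (j == 0) || P j.-1 & (j == T) || P j.+1].

Lemma bstep_GG (P : nat -> bool) : bstep r WW (GG P) = GG (Pn P).
Proof.
apply/setP => f; rewrite /bstep in_setU.
apply/idP/idP.
- case/orP => [hf|hf].
    move: hf; rewrite /GG !in_setD => /andP [hE hK]; rewrite hK andbT.
    apply: contra hE => /in_Eset [j [hj /and3P [hPj _ _] fj]].
    by apply/in_Eset; exists j.
  move: hf; rewrite inE => /and3P [/andP [hfW /eqP hfc] hfn /existsP [w /andP [hw /forallP hall]]].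
  move: hw; rewrite in_setD => /andP [hwn hwW].
  have hall' : forall g : {set V}, g \subset w |: f -> #|g| = r -> g != f -> g \in GG P.
    move=> g h1 h2 h3; have := hall g; rewrite h2 eqxx h3 andbT /=.
    have -> : g \subset f :|: [set w] by rewrite setUC.
    by move/implyP; apply.
  have hyp : forall x, x \in f -> exists s, s < T /\ ((w |: f) :\ x) \subset SSs s.
    move=> x hx.
    have hg : (w |: f) :\ x \in GG P.
      apply: hall'; first exact: subsetDl.
        have := cardsD1 x (w |: f); rewrite in_setU1 hx orbT cardsU1 hwn hfc add1n.
        by case.
      apply/eqP => E; have : w \in (w |: f) :\ x.
        by rewrite in_setD1 setU11 andbT; apply/eqP => E2; rewrite E2 hx in hwn.
      by rewrite E (negPf hwn).
    by case/in_Kset: (GG_K hg) => s [hs [hsub _]]; exists s.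
  have [s [hs hsub]] := closeA hfW hfc hwW hwn hyp.
  have fK : f \in Kset.
    apply/in_Kset; exists s; split => //; split => //.
    by apply: subset_trans hsub; apply: subsetUr.
  have fE : f \in Eset P by move: hfn; rewrite /GG in_setD fK andbT negbK.
  case/in_Eset: fE => j [hj hPj fj].
  rewrite /GG in_setD fK andbT; apply/negP => /in_Eset [j' [hj' hP'j fj']].
  have jj : j' = j by apply: ee_inj => //; rewrite -fj -fj'.
  subst j'.
  have Seq := SS_eq hs hfc hwn hsub.
  have hjs : j = s \/ j = s.+1 by apply: ee_sub => //; rewrite -fj; apply: subset_trans hsub; apply: subsetUr.
  have notP : forall o, (o = s \/ o = s.+1) -> o != j -> ~~ P o.
    move=> o ho oj; have hoT : o <= T by case: ho => ->; [apply: ltnW|].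
    have hg : ee o \in GG P.
      apply: hall'.
      - by rewrite Seq /SSs; case: ho => ->; [apply: subsetUl | apply: subsetUr].
      - exact: ee_card.
      - apply/eqP => E; move/eqP: oj; apply; apply: ee_inj => //; by rewrite -fj.
    apply/negP => hPo; move: hg; rewrite /GG in_setD => /andP [/negP hE _]; apply: hE.
    by apply/in_Eset; exists o.
  move: hP'j; rewrite /Pn => /and3P [_ h1 h2].
  case: hjs => E; subst j.
    have ns : s.+1 != s by apply/eqP; lia.
    have hn := notP s.+1 (or_intror erefl) ns.
    have sT : (s == T) = false by apply/eqP; lia.
    by rewrite sT /= (negPf hn) in h2.
  have ns : s != s.+1 by apply/eqP; lia.
  have hn := notP s (or_introl erefl) ns.
  by rewrite /= (negPf hn) in h1.
- move=> hf; case: (boolP (f \in Eset P)) => hE; last first.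
    by apply/orP; left; rewrite /GG in_setD hE (GG_K hf).
  apply/orP; right; case/in_Eset: hE => j [hj hPj fj]; rewrite fj.
  have hnP : ~~ Pn P j.
    apply/negP => h; move: hf; rewrite /GG in_setD => /andP [/negP hE _]; apply: hE.
    by apply/in_Eset; exists j.
  move: hnP; rewrite /Pn hPj /= negb_and => /orP [h|h].
    have hj0 : j != 0 by apply/negP => /eqP E; rewrite E in h.
    rewrite (negPf hj0) /= in h.
    apply: (newinf (s := j.-1) (o := j.-1)) => //; first by lia.
    by right; split => //; lia.
  have hjT : j != T by apply/negP => /eqP E; rewrite E eqxx in h.
  rewrite (negPf hjT) /= in h.
  apply: (newinf (s := j) (o := j.+1)) => //; first by lia.
  by left.
Qed.


Lemma bproc_GG (P : nat -> nat -> bool) G0 n :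
  G0 = GG (P 0) ->
  (forall i j, i < n -> j <= T -> Pn (P i) j = P i.+1 j) ->
  forall i, i <= n -> bproc r WW G0 i = GG (P i).
Proof.
move=> h0 hs; elim => [//|i IH] hi.
rewrite /bproc iterS -/(bproc r WW G0 i) IH; last by apply: ltnW.
by rewrite bstep_GG; apply: GG_ext => j hj; apply: hs.
Qed.

Lemma main_seq : [/\ (forall i, i <= T -> vx \in ee i),
  (forall f, f \in GG (fun j => 0 < j) -> rsubset r WW f) &
  sequential r WW (GG (fun j => 0 < j)) ee T].
Proof.
have rsK : forall f, f \in Kset -> rsubset r WW f.
  move=> f /in_Kset [s [hs [hsub hc]]]; rewrite /rsubset hc eqxx andbT.
  by apply: subset_trans hsub _; apply: SS_W.
split.
- by move=> i _; rewrite in_ee eqxx.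
- by move=> f /GG_K; apply: rsK.
have e0H : ee 0 \in GG (fun j => 0 < j).
  rewrite /GG in_setD ee_K // andbT; apply/negP => /in_Eset [j [hj hj0 E]].
  by have := ee_inj (leq0n T) hj E; lia.
split.
- by move=> i hi; apply: rsK; apply: ee_K.
- exact: e0H.
- have hf : forall i, i <= T -> bproc r WW (GG (fun j => 0 < j)) i = GG (fun j => i < j).
    apply: (bproc_GG (P := fun i j => i < j)) => // i j hi hj; rewrite /Pn; lia.
  split.
    move=> i /andP [hi1 hi2]; rewrite hf // hf; last by lia.
    apply: GG_diff; first exact: hi2.
      by move=> j hj; lia.
    by rewrite ltnn.
  rewrite /stationary hf // bstep_GG; apply: GG_ext => j hj; rewrite /Pn; lia.
- have -> : GG (fun j => 0 < j) :\ ee 0 = GG (fun _ => true).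
    apply/setP => f; rewrite in_setD1 /GG !in_setD.
    case: (boolP (f \in Kset)) => hK; last by rewrite !andbF.
    rewrite !andbT; apply/idP/idP.
      move=> /andP [hf0 hE]; apply/negP => /in_Eset [j [hj _ fj]]; move/negP: hE; apply.
      apply/in_Eset; exists j; split => //; apply/negP => /negP; rewrite -eqn0Ngt => /eqP j0.
      by rewrite fj j0 eqxx in hf0.
    move=> hE; apply/andP; split.
      by apply/eqP => E; move/negP: hE; apply; apply/in_Eset; exists 0.
    by apply: contra hE => /in_Eset [j [hj _ fj]]; apply/in_Eset; exists j.
  by rewrite /stationary bstep_GG; apply: GG_ext => j hj; rewrite /Pn; lia.
- have eG : (GG (fun j => 0 < j) :|: [set ee T]) :\ ee 0 = GG (fun j => j < T).
    apply/setP => f; rewrite in_setD1 in_setU in_set1 /GG !in_setD.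
    case: (eqVneq f (ee T)) => [->|fT] /=.
      have h1 : ee T != ee 0 by apply/eqP => E; have := ee_inj (leqnn T) (leq0n T) E; lia.
      have h2 : ee T \notin Eset (fun j => j < T).
        apply/negP => /in_Eset [j [hj hjT E]].
        by have := ee_inj (leqnn T) hj E; lia.
      by rewrite ee_K // !andbT orbT h1 h2.
    rewrite orbF; case: (boolP (f \in Kset)) => hK; last by rewrite !andbF.
    rewrite !andbT; apply/idP/idP.
      move=> /andP [hf0 hE]; apply/negP => /in_Eset [j [hj hjT fj]]; move/negP: hE; apply.
      apply/in_Eset; exists j; split => //; apply/negP => /negP; rewrite -eqn0Ngt => /eqP j0.
      by rewrite fj j0 eqxx in hf0.
    move=> hE; apply/andP; split.
      apply/eqP => E; move/negP: hE; apply; apply/in_Eset; exists 0; split => //.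
    apply: contra hE => /in_Eset [j [hj hj0 fj]]; apply/in_Eset; exists j; split => //.
    rewrite ltn_neqAle hj andbT; apply/eqP => E; move/eqP: fT; apply; by rewrite fj E.
  rewrite eG.
  have hb : forall i, i <= T -> bproc r WW (GG (fun j => j < T)) i = GG (fun j => j < T - i).
    apply: (bproc_GG (P := fun i j => j < T - i)) => [|i j hi hj]; last by rewrite /Pn; lia.
    by apply: GG_ext => j hj; rewrite subn0.
  move=> i /andP [hi1 hi2]; rewrite hb // hb; last by lia.
  apply: GG_diff; first by lia.
    move=> j hj; lia.
  lia.
Qed.

End Sets.

Unset Implicit Arguments.

Lemma T1_bounds (r k : nat) : 3 <= r -> 2 <= k ->
  0 < (2 * k - 1) ^ (r - 3) * (8 * k ^ 2 - 12 * k + 6) - 2 /\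
  ((2 * k - 1) ^ (r - 3) * (8 * k ^ 2 - 12 * k + 6) - 2).+2 <= LL (2 * k - 1) r.-1.
Proof.
move=> hr hk.
have hK : 0 < 2 * k - 1 by lia.
have hX : 0 < (2 * k - 1) ^ (r - 3) by rewrite expn_gt0 hK.
move: hX; set X := (2 * k - 1) ^ (r - 3) => hX.
have e1 : LL (2 * k - 1) r.-1 = X * ((2 * k - 1) ^ 2).*2.
  rewrite /LL /X -doubleMr -expnD; congr (_ ^ _).*2; lia.
rewrite e1.
have hA : 14 <= 8 * k ^ 2 - 12 * k + 6 by nia.
have hc : 8 * k ^ 2 - 12 * k + 6 <= ((2 * k - 1) ^ 2).*2 by nia.
have h1 : X * (8 * k ^ 2 - 12 * k + 6) <= X * ((2 * k - 1) ^ 2).*2 by rewrite leq_mul2l hc orbT.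
have h2 : 8 * k ^ 2 - 12 * k + 6 <= X * (8 * k ^ 2 - 12 * k + 6) by rewrite leq_pmull.
move: h1 h2; set A := X * (8 * k ^ 2 - 12 * k + 6); set B := X * ((2 * k - 1) ^ 2).*2.
move: hA; set C := 8 * k ^ 2 - 12 * k + 6.
lia.
Qed.

Theorem proposition2p3 (r k : nat) :
  3 <= r -> 2 <= k ->
  let T1 := (2 * k - 1) ^ (r - 3) * (8 * k ^ 2 - 12 * k + 6) - 2 in
  let W : {set vtx r k} := Astar r k (r - 1) :|: [set vv r k r 1] in
  exists (e : nat -> {set vtx r k}) (H1 : {set {set vtx r k}}),
    [/\ (forall i, i <= T1 -> vv r k r 1 \in e i),
        (forall f, f \in H1 -> rsubset r W f) &
        sequential r W H1 e T1].
Proof.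
move=> hr hk T1 W.
have [hT hL] := T1_bounds r k hr hk.
rewrite -/T1 in hT hL.
have hK : 0 < 2 * k - 1 by lia.
pose p := fun i d => pt (2 * k - 1) r.-1 i d.
have hval : forall i, i <= T1 -> i.+1 < LL (2 * k - 1) r.-1.
  by move=> i hi; apply: leq_ltn_trans hL; rewrite ltnS; apply: leq_trans hi _.
have hval2 : forall s, s < T1 -> s.+2 < LL (2 * k - 1) r.-1.
  by move=> s hs; apply: hval.
have hrange : forall i d, i <= T1 -> 0 < d <= r.-1 -> 0 < p i d <= 4 * k - 3.
  move=> i d hi hd; have := pt_range hK (hval i hi) hd; rewrite /p.
  have -> : (2 * k - 1).*2.-1 = 4 * k - 3 by lia.
  by [].
have hinj : forall i j, i <= T1 -> j <= T1 ->
    (forall d, 0 < d <= r.-1 -> p i d = p j d) -> i = j.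
  by move=> i j hi hj h; apply: (pt_inj hK (hval i hi) (hval j hj)).
have hex : forall s, s < T1 -> exists2 d, 0 < d <= r.-1 & p s d != p s.+1 d.
  move=> s hs; have [d [hd [hc _]]] := pt_step hK (hval2 s hs).
  by exists d => //; rewrite /p; apply/eqP; case: hc => ->; lia.
have huq : forall s d (x : nat), s < T1 -> p s d != p s.+1 d -> x != d -> p s x = p s.+1 x.
  by move=> s d x hs hd hx; have [_ _ h] := pt_diff hK (hval2 s hs) hd; apply: h.
have hcons : forall s d, s < T1 -> p s d != p s.+1 d ->
    p s d = (p s.+1 d).+1 \/ p s.+1 d = (p s d).+1.
  by move=> s d hs hd; have [_ h _] := pt_diff hK (hval2 s hs) hd.
have hodd : forall s d x, s < T1 -> p s d != p s.+1 d -> d < x -> x <= r.-1 -> odd (p s x).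
  by move=> s d x hs hd hx hxn; apply: (pt_odd hK (hval2 s hs) hd hx hxn).
have hlow : forall s s' d x, s < T1 -> s' < T1 -> p s d != p s.+1 d ->
    p s' d != p s'.+1 d -> minn (p s d) (p s.+1 d) = minn (p s' d) (p s'.+1 d) ->
    x < d -> p s x = p s' x.
  by move=> s s' d x hs hs' hd hd' hm hx; apply: (pt_low hK (hval2 s hs) (hval2 s' hs') hd hd' hm hx).
have hadj : forall i j d, i <= T1 -> j <= T1 -> 0 < d <= r.-1 ->
    (forall x, 0 < x <= r.-1 -> x != d -> p i x = p j x) ->
    (p i d = (p j d).+1 \/ p j d = (p i d).+1) -> i = j.+1 \/ j = i.+1.
  by move=> i j d hi hj hd h hc; apply: (pt_adj hK (hval i hi) (hval j hj) hd h hc).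
have h := main_seq hr hk hT hrange hinj hex huq hcons hodd hlow hadj.
do 2 eexists; exact: h.
Qed.
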